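(* Let $F_t$, $t\in[0,1]$, be a one-parameter family on a complete metric space $(\mathbb X,d)$ satisfying (H1), (H2) and (H3). Then the lower transition attractor $A_\bullet$ exists, and: (i) $A_\bullet=\bigcap\{A\subseteq\mathbb X: F_1(A)=A \text{ and } Q\subseteq A\}$; (ii) $A_\bullet=\overline{\bigcup_{n\ge 0}F_1^{(n)}(Q)}$; (iii) $A_\bullet=\overline{\bigcup_{n\ge0}F_1^{(n)}(Q')}$, where $Q'=\{q_i:i\in J\}$ for any nonempty $J\subseteq\{1,\dots,N\}$ with $\{i:\mathrm{Lip}(f_{(i,1)},d)=1\}\subseteq J$; (iv) for any such $Q'$, $A_\bullet$ is the semiattractor of the IFS $F_1^\flat:=F_1\cup\{\check q: q\in Q'\}$, where $\check q:\mathbb X\to\mathbb X$ is the constant map $\check q(x)=q$.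
   Context: Let $(\mathbb X,d)$ be a complete metric space. A one-parameter family is $F_t=\{f_{(1,t)},\dots,f_{(N,t)}\}$, $t\in[0,1]$, $N\ge2$, of continuous self-maps of $\mathbb X$. $\mathrm{Lip}(f,d)=\sup_{x\ne y}d(f(x),f(y))/d(x,y)$ and $\mathrm{Lip}(F_t,d)=\max_i\mathrm{Lip}(f_{(i,t)},d)$. Conditions: (H1) for every $x\in\mathbb X$ and every $i$, the map $t\mapsto f_{(i,t)}(x)$ is continuous on $[0,1]$; (H2) $\mathrm{Lip}(F_t,d)<1$ for all $t\in[0,1)$; (H3) for each $i$ the limit $q_i=\lim_{t\to1^-}q_{i,t}$ exists, where $q_{i,t}$ is the unique fixed point of $f_{(i,t)}$ for $t\in[0,1)$; $Q=\{q_1,\dots,q_N\}$. For an IFS $F$ (a family of continuous self-maps) and $S\subseteq\mathbb X$, the Hutchinson operator is $F(S)=\overline{\bigcup_{f\in F}f(S)}$, $F^{(n)}$ its $n$-fold iterate, $F^{(0)}=\mathrm{id}$. The lower transition attractor of $F_t$ is the smallest (w.r.t. inclusion) set $A_\bullet\subseteq\mathbb X$ with $F_1(A_\bullet)=A_\bullet$ and $Q\subseteq A_\bullet$. For sets $S_n\subseteq\mathbb X$, $Li(S_n)=\{y\in\mathbb X:\exists x_n\in S_n,\ x_n\to y\}$ (lower Kuratowski limit). The semiattractor of an IFS $F$ on $\mathbb X$ is $A_*=\bigcap_{x\in\mathbb X}Li(F^{(n)}(\{x\}))$, provided this intersection is nonempty. *)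

(* Defs.v *)
From Stdlib Require Import Reals.
From Coquelicot Require Import Coquelicot.
Open Scope R_scope.

Section Metric.
Variable X : Type.
Variable d : X -> X -> R.

Definition is_metric : Prop :=
  (forall x y, 0 <= d x y) /\
  (forall x y, d x y = 0 <-> x = y) /\
  (forall x y, d x y = d y x) /\
  (forall x y z, d x z <= d x y + d y z).

Definition seq_cvg (u : nat -> X) (l : X) : Prop :=
  forall eps, 0 < eps -> exists M, forall n, (M <= n)%nat -> d (u n) l < eps.

Definition cauchy (u : nat -> X) : Prop :=
  forall eps, 0 < eps -> exists M, forall m n, (M <= m)%nat -> (M <= n)%nat ->
    d (u m) (u n) < eps.

Definition complete : Prop :=
  forall u : nat -> X, cauchy u -> exists l, seq_cvg u l.

Definition continuous_map (f : X -> X) : Prop :=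
  forall x eps, 0 < eps -> exists delta, 0 < delta /\
    forall y, d x y < delta -> d (f x) (f y) < eps.

Definition Lip (f : X -> X) : Rbar :=
  Lub_Rbar (fun r => exists x y, x <> y /\ r = d (f x) (f y) / d x y).

Definition set_eq (A B : X -> Prop) : Prop := forall x, A x <-> B x.
Definition subset (A B : X -> Prop) : Prop := forall x, A x -> B x.

Definition closure (S : X -> Prop) : X -> Prop :=
  fun x => forall eps, 0 < eps -> exists y, S y /\ d x y < eps.

Definition IFS := (X -> X) -> Prop.

Definition hutchinson (F : IFS) (S : X -> Prop) : X -> Prop :=
  closure (fun y => exists g, F g /\ exists z, S z /\ y = g z).

Fixpoint hutch_iter (F : IFS) (n : nat) (S : X -> Prop) : X -> Prop :=
  match n with
  | O => S
  | S n' => hutchinson F (hutch_iter F n' S)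
  end.

Definition orbit_closure (F : IFS) (S : X -> Prop) : X -> Prop :=
  closure (fun x => exists n, hutch_iter F n S x).

Definition Li (Sn : nat -> X -> Prop) : X -> Prop :=
  fun y => exists u : nat -> X, (forall n, Sn n (u n)) /\ seq_cvg u y.

Definition is_semiattractor (F : IFS) (A : X -> Prop) : Prop :=
  (exists y, A y) /\
  set_eq A (fun y => forall x, Li (fun n => hutch_iter F n (fun z => z = x)) y).

End Metric.

Arguments hutchinson {X} d F S _.
Arguments hutch_iter {X} d F n S _.
Arguments orbit_closure {X} d F S _.
Arguments is_semiattractor {X} d F A.
Arguments Lip {X} d f.
Arguments set_eq {X} A B.
Arguments subset {X} A B.

(** The one-parameter family: f i t is f_{(i+1,t)}, for i < N (0-based indices). *)

Definition F1 {X : Type} (N : nat) (f : nat -> R -> X -> X) : (X -> X) -> Prop :=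
  fun g => exists i, (i < N)%nat /\ g = f i 1.

Definition Qset {X : Type} (N : nat) (q : nat -> X) : X -> Prop :=
  fun x => exists i, (i < N)%nat /\ x = q i.
Definition Qsub {X : Type} (J : nat -> Prop) (q : nat -> X) : X -> Prop :=
  fun x => exists i, J i /\ x = q i.

Definition F1flat {X : Type} (N : nat) (f : nat -> R -> X -> X)
  (J : nat -> Prop) (q : nat -> X) : (X -> X) -> Prop :=
  fun g => F1 N f g \/ exists i, J i /\ g = (fun _ : X => q i).

Definition is_lower_transition_attractor {X : Type} (d : X -> X -> R) (N : nat)
  (f : nat -> R -> X -> X) (q : nat -> X) (A : X -> Prop) : Prop :=
  set_eq (hutchinson d (F1 N f) A) A /\ subset (Qset N q) A /\
  forall B : X -> Prop, set_eq (hutchinson d (F1 N f) B) B ->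
    subset (Qset N q) B -> subset A B.

(* Main.v *)
Require Import Defs.
From Stdlib Require Import Reals Lra Lia Classical ClassicalEpsilon.
From Coquelicot Require Import Coquelicot.
Open Scope R_scope.


Lemma dpos {X} (d : X -> X -> R) : is_metric X d -> forall x y, 0 <= d x y.
Proof. intros [H _]; exact H. Qed.
Lemma drefl {X} (d : X -> X -> R) : is_metric X d -> forall x, d x x = 0.
Proof. intros [_ [H _]] x; apply H; reflexivity. Qed.
Lemma deq0 {X} (d : X -> X -> R) : is_metric X d -> forall x y, d x y = 0 -> x = y.
Proof. intros [_ [H _]] x y; apply H. Qed.
Lemma dsym {X} (d : X -> X -> R) : is_metric X d -> forall x y, d x y = d y x.
Proof. intros [_ [_ [H _]]]; exact H. Qed.
Lemma dtri {X} (d : X -> X -> R) : is_metric X d -> forall x y z, d x z <= d x y + d y z.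
Proof. intros [_ [_ [_ H]]]; exact H. Qed.
Lemma dneq {X} (d : X -> X -> R) : is_metric X d -> forall x y, x <> y -> 0 < d x y.
Proof.
  intros Hm x y Hxy. destruct (dpos d Hm x y) as [H|H]; auto.
  exfalso; apply Hxy; apply (deq0 d Hm); auto.
Qed.
Lemma dzero {X} (d : X -> X -> R) : is_metric X d -> forall x y,
  (forall eps, 0 < eps -> d x y < eps) -> x = y.
Proof.
  intros Hm x y H. apply (deq0 d Hm). apply Rle_antisym; [|apply (dpos d Hm)].
  apply Rle_plus_epsilon; intros e He. rewrite Rplus_0_l. left; auto.
Qed.

Lemma closure_incl {X} d (Hm : is_metric X d) P : subset P (closure X d P).
Proof. intros x Hx e He. exists x; split; auto. rewrite (drefl d Hm). auto. Qed.

Lemma closure_mono {X} d P T : subset P T -> subset (closure X d P) (closure X d T).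
Proof. intros H x Hx e He. destruct (Hx e He) as [y [Hy Hd]]. exists y; auto. Qed.

Lemma closure_idem {X} d (Hm : is_metric X d) P :
  subset (closure X d (closure X d P)) (closure X d P).
Proof.
  intros x Hx e He. destruct (Hx (e/2)) as [y [Hy Hd]]; [lra|].
  destruct (Hy (e/2)) as [z [Hz Hd']]; [lra|].
  exists z; split; auto. pose proof (dtri d Hm x y z). lra.
Qed.

Lemma hutch_mono {X} d (F G : IFS X) P T : (forall g, F g -> G g) -> subset P T ->
  subset (hutchinson d F P) (hutchinson d G T).
Proof.
  intros HFG HPT. apply closure_mono. intros y [g [Hg [z [Hz ->]]]].
  exists g; split; auto. exists z; auto.
Qed.

Lemma hutch_closed {X} d (Hm : is_metric X d) F P :
  subset (closure X d (hutchinson d F P)) (hutchinson d F P).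
Proof. apply closure_idem; auto. Qed.

Lemma hutch_in {X} d (Hm : is_metric X d) (F : IFS X) P g z :
  F g -> P z -> hutchinson d F P (g z).
Proof. intros Hg Hz. apply closure_incl; auto. exists g; split; auto. exists z; auto. Qed.

Lemma hutch_closure {X} d (Hm : is_metric X d) (F : IFS X) P :
  (forall g, F g -> forall a b, d (g a) (g b) <= d a b) ->
  subset (hutchinson d F (closure X d P)) (hutchinson d F P).
Proof.
  intros Hne x Hx e He. destruct (Hx (e/2)) as [y [[g [Hg [z [Hz ->]]]] Hd]]; [lra|].
  destruct (Hz (e/2)) as [w [Hw Hd']]; [lra|].
  exists (g w); split. exists g; split; auto. exists w; auto.
  pose proof (dtri d Hm x (g z) (g w)). pose proof (Hne g Hg z w). lra.
Qed.

Lemma hutch_union {X} d (Hm : is_metric X d) (F : IFS X) (Pn : nat -> X -> Prop) :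
  subset (hutchinson d F (fun x => exists n, Pn n x))
         (closure X d (fun x => exists n, hutchinson d F (Pn n) x)).
Proof.
  intros x Hx e He. destruct (Hx e He) as [y [[g [Hg [z [[n Hz] ->]]]] Hd]].
  exists (g z); split; auto. exists n. apply hutch_in; auto.
Qed.

Lemma iter_mono_set {X} d (F : IFS X) n P T : subset P T ->
  subset (hutch_iter d F n P) (hutch_iter d F n T).
Proof.
  intros H; induction n; simpl; auto. apply hutch_mono; auto.
Qed.

Lemma iter_incr {X} d (F : IFS X) P : subset P (hutchinson d F P) ->
  forall n, subset (hutch_iter d F n P) (hutch_iter d F (S n) P).
Proof.
  intros H n; induction n; simpl; auto. apply hutch_mono; auto.
Qed.

Lemma iter_incr_le {X} d (F : IFS X) P : subset P (hutchinson d F P) ->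
  forall n m, (n <= m)%nat -> subset (hutch_iter d F n P) (hutch_iter d F m P).
Proof.
  intros H n m Hnm; induction Hnm; intros x Hx; auto.
  apply (iter_incr d F P H m); auto.
Qed.

Lemma orbit_fixed {X} d (Hm : is_metric X d) (F : IFS X) P
  (Hne : forall g, F g -> forall a b, d (g a) (g b) <= d a b)
  (Hseed : subset P (hutchinson d F P)) :
  set_eq (hutchinson d F (orbit_closure d F P)) (orbit_closure d F P).
Proof.
  intros x; split; intros Hx.
  - apply hutch_closure in Hx; auto. apply hutch_union in Hx; auto.
    revert x Hx. apply closure_mono. intros y [n Hy]. exists (S n); exact Hy.
  - apply hutch_closed; auto. revert x Hx. apply closure_mono.
    intros y [n Hy]. apply (iter_incr d F P Hseed n) in Hy. simpl in Hy.
    revert y Hy. apply hutch_mono; auto. intros z Hz.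
    apply closure_incl; auto. exists n; auto.
Qed.

Lemma set_closed {X} d (Hm : is_metric X d) (F : IFS X) B :
  set_eq (hutchinson d F B) B -> subset (closure X d B) B.
Proof.
  intros HB x Hx. apply HB. apply hutch_closed; auto.
  revert x Hx. apply closure_mono. intros y Hy; apply HB; auto.
Qed.

Lemma orbit_min {X} d (Hm : is_metric X d) (F : IFS X) P B :
  set_eq (hutchinson d F B) B -> subset P B -> subset (orbit_closure d F P) B.
Proof.
  intros HB HPB x Hx. apply (set_closed d Hm F B HB). revert x Hx.
  apply closure_mono. intros y [n Hy]. revert y Hy. induction n; simpl; auto.
  intros y Hy. apply HB. revert y Hy. apply hutch_mono; auto.
Qed.

Lemma orbit_incl {X} d (Hm : is_metric X d) (F : IFS X) P : subset P (orbit_closure d F P).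
Proof. intros x Hx. apply closure_incl; auto. exists O; auto. Qed.

Lemma orbit_mono {X} d (F : IFS X) P T : subset P T -> subset (orbit_closure d F P) (orbit_closure d F T).
Proof.
  intros H. apply closure_mono. intros y [n Hy]. exists n. revert y Hy. apply iter_mono_set; auto.
Qed.

Lemma big_INR (r e : R) : 0 < e -> exists N : nat, r < INR N * e.
Proof.
  intros He. destruct (Rle_or_lt r 0) as [Hr|Hr].
  - exists 1%nat. simpl. lra.
  - destruct (archimed_cor1 (e / (r + 1))) as [N [HN1 HN2]].
    { apply Rdiv_lt_0_compat; lra. }
    exists N. assert (HI : 0 < INR N) by (apply lt_0_INR; lia).
    assert (Hk : INR N * / INR N = 1) by (field; lra).
    set (a := / INR N) in *.
    assert (H1 : a * (r + 1) < e).
    { apply (Rmult_lt_compat_r (r+1)) in HN1; [|lra].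
      replace (e / (r + 1) * (r + 1)) with e in HN1 by (field; lra). exact HN1. }
    nra.
Qed.

Lemma lip_contr {X} d (Hm : is_metric X d) (g : X -> X) : Rbar_lt (Lip d g) 1 ->
  exists c, 0 <= c < 1 /\ forall a b, d (g a) (g b) <= c * d a b.
Proof.
  unfold Lip. destruct (Lub_Rbar_correct (fun r => exists x y, x <> y /\ r = d (g x) (g y) / d x y))
    as [Hub _].
  destruct (Lub_Rbar _) as [L| |] eqn:HL; simpl; intros Hlt; try contradiction.
  - exists (Rmax L 0). split. split. apply Rmax_r. apply Rmax_lub_lt; lra.
    intros a b. destruct (classic (a = b)) as [->|Hab].
    + rewrite !(drefl d Hm). lra.
    + pose proof (dneq d Hm a b Hab).
      assert (Hr : Rbar_le (d (g a) (g b) / d a b) (Finite L)).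
      { apply Hub. exists a, b; auto. }
      simpl in Hr. replace (d (g a) (g b)) with ((d (g a) (g b) / d a b) * d a b) by (field; lra).
      apply Rmult_le_compat_r; [lra|]. eapply Rle_trans; [exact Hr|apply Rmax_l].
  - exists 0. split. lra. intros a b. destruct (classic (a = b)) as [->|Hab].
    + rewrite !(drefl d Hm). lra.
    + exfalso. assert (Hr : Rbar_le (d (g a) (g b) / d a b) m_infty).
      { apply Hub. exists a, b; auto. }
      simpl in Hr; auto.
Qed.

Lemma lip_le1 {X} d (Hm : is_metric X d) (g : X -> X) :
  (forall a b, d (g a) (g b) <= d a b) -> Rbar_le (Lip d g) 1.
Proof.
  intros H. unfold Lip.
  destruct (Lub_Rbar_correct (fun r => exists x y, x <> y /\ r = d (g x) (g y) / d x y))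
    as [_ Hl].
  apply Hl. intros r [a [b [Hab ->]]]. simpl. pose proof (dneq d Hm a b Hab).
  pose proof (H a b). apply Rmult_le_reg_r with (d a b); auto.
  replace (d (g a) (g b) / d a b * d a b) with (d (g a) (g b)) by (field; lra). lra.
Qed.

Lemma banach {X} d (Hm : is_metric X d) (Hc : complete X d) (g : X -> X) c (x0 : X) :
  0 <= c < 1 -> (forall a b, d (g a) (g b) <= c * d a b) -> exists y, g y = y.
Proof.
  intros Hcc Hg. set (x := fun n => Nat.iter n g x0).
  set (D := d x0 (g x0)).
  assert (HD : 0 <= D) by apply (dpos d Hm).
  assert (Hstep : forall n, d (x n) (x (S n)) <= c ^ n * D).
  { induction n. simpl. unfold D. lra.
    change (x (S n)) with (g (x n)). change (x (S (S n))) with (g (x (S n))).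
    eapply Rle_trans. apply Hg. change (c ^ S n) with (c * c ^ n). rewrite Rmult_assoc.
    apply Rmult_le_compat_l; [lra | exact IHn]. }
  assert (Htail : forall k n, d (x n) (x (n + k)%nat) * (1 - c) <= c ^ n * D).
  { induction k; intros n.
    - rewrite Nat.add_0_r, (drefl d Hm). rewrite Rmult_0_l.
      apply Rmult_le_pos; auto. apply pow_le; lra.
    - replace (n + S k)%nat with (S n + k)%nat by lia.
      pose proof (IHk (S n)) as Hk. pose proof (Hstep n) as Hs.
      pose proof (dtri d Hm (x n) (x (S n)) (x (S n + k)%nat)) as Ht.
      change (c ^ S n) with (c * c ^ n) in Hk.
      assert (H1 : d (x n) (x (S n + k)%nat) * (1 - c) <=
                   (d (x n) (x (S n)) + d (x (S n)) (x (S n + k)%nat)) * (1 - c)).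
      { apply Rmult_le_compat_r; lra. }
      assert (H2 : d (x n) (x (S n)) * (1 - c) <= c ^ n * D * (1 - c)).
      { apply Rmult_le_compat_r; lra. }
      rewrite Rmult_plus_distr_r in H1.
      assert (E : c ^ n * D * (1 - c) + c * c ^ n * D = c ^ n * D) by ring.
      lra. }
  assert (Hcau : Defs.cauchy X d x).
  { intros eps He.
    destruct (pow_lt_1_zero c) with (y := eps * (1 - c) / (D + 1)) as [M HM].
    { rewrite Rabs_pos_eq; lra. }
    { apply Rdiv_lt_0_compat; [apply Rmult_lt_0_compat|]; lra. }
    exists M. assert (Hgen : forall m k, (M <= m)%nat -> d (x m) (x (m + k)%nat) < eps).
    { intros m k Hm'. pose proof (HM m Hm') as H1. rewrite Rabs_pos_eq in H1 by (apply pow_le; lra).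
      pose proof (Htail k m) as H2.
      assert (H3 : c ^ m * D <= eps * (1 - c) / (D + 1) * D).
      { apply Rmult_le_compat_r; lra. }
      assert (H4 : eps * (1 - c) / (D + 1) * D < eps * (1 - c)).
      { unfold Rdiv. replace (eps * (1 - c) * / (D + 1) * D) with (eps * (1 - c) * (D / (D + 1))) by (field; lra).
        rewrite <- (Rmult_1_r (eps * (1 - c))) at 2. apply Rmult_lt_compat_l.
        apply Rmult_lt_0_compat; lra. apply Rmult_lt_reg_r with (D + 1); [lra|].
        unfold Rdiv. rewrite Rmult_assoc, Rinv_l by lra. lra. }
      assert (H5 : d (x m) (x (m + k)%nat) * (1 - c) < eps * (1 - c)) by lra.
      apply Rmult_lt_reg_r with (1 - c); lra. }
    intros m n Hm1 Hn1. destruct (Nat.le_gt_cases m n) as [Hmn|Hmn].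
    - replace n with (m + (n - m))%nat by lia. apply Hgen; auto.
    - rewrite (dsym d Hm). replace m with (n + (m - n))%nat by lia. apply Hgen; auto. }
  destruct (Hc x Hcau) as [l Hl]. exists l. apply (dzero d Hm). intros eps He.
  destruct (Hl (eps/2)) as [M HM]; [lra|].
  pose proof (HM M (le_n _)) as H1. pose proof (HM (S M) (le_S _ _ (le_n _))) as H2.
  change (x (S M)) with (g (x M)) in H2.
  pose proof (dtri d Hm (g l) (g (x M)) l) as H3. pose proof (Hg l (x M)) as H4.
  pose proof (dsym d Hm l (x M)) as H5.
  pose proof (dpos d Hm (x M) l) as H6.
  rewrite H5 in H4. assert (c * d (x M) l <= 1 * d (x M) l) by (apply Rmult_le_compat_r; lra). lra.
Qed.

Lemma approx {X} d (Hm : is_metric X d) (Pn : nat -> X -> Prop) y :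
  (forall n, subset (Pn n) (Pn (S n))) -> (forall n, exists z, Pn n z) ->
  closure X d (fun x => exists n, Pn n x) y ->
  exists v : nat -> X, (forall n, Pn n (v n)) /\ seq_cvg X d v y.
Proof.
  intros Hinc Hne Hy.
  assert (Hle : forall n m, (n <= m)%nat -> subset (Pn n) (Pn m)).
  { intros n m H; induction H; intros z Hz; [exact Hz | apply Hinc; apply IHle; exact Hz]. }
  assert (Hch : forall n, exists z, Pn n z /\ forall w, Pn n w -> d z y < d w y + / (INR n + 1)).
  { intros n. set (e := / (INR n + 1)).
    assert (He : 0 < e) by (apply Rinv_0_lt_compat; pose proof (pos_INR n); lra).
    apply NNPP. intros Hno.
    assert (Hst : forall z, Pn n z -> exists w, Pn n w /\ d w y <= d z y - e).
    { intros z Hz. apply NNPP. intros Hw. apply Hno. exists z. split; auto.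
      intros w Hw'. destruct (Rlt_or_le (d z y) (d w y + e)); auto.
      exfalso. apply Hw. exists w. split; auto. lra. }
    destruct (Hne n) as [z0 Hz0].
    assert (Hk : forall k, exists z, Pn n z /\ d z y <= d z0 y - INR k * e).
    { induction k. exists z0; simpl; split; auto; lra.
      destruct IHk as [z [Hz Hd]]. destruct (Hst z Hz) as [w [Hw Hdw]].
      exists w; split; auto. rewrite S_INR. lra. }
    destruct (big_INR (d z0 y) e He) as [N HN].
    destruct (Hk N) as [z [_ Hz]]. pose proof (dpos d Hm z y). lra. }
  exists (fun n => proj1_sig (constructive_indefinite_description _ (Hch n))).
  split.
  - intros n. exact (proj1 (proj2_sig (constructive_indefinite_description _ (Hch n)))).
  - intros eps He. destruct (Hy (eps/2)) as [w [[k Hw] Hdw]]; [lra|].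
    destruct (archimed_cor1 (eps/2)) as [M1 [HM1 HM1']]; [lra|].
    exists (max k M1). intros n Hn.
    pose proof (proj2 (proj2_sig (constructive_indefinite_description _ (Hch n)))) as Hzw.
    set (z := proj1_sig (constructive_indefinite_description _ (Hch n))) in *.
    assert (Hwn : Pn n w) by (apply (Hle k n); auto; lia).
    pose proof (Hzw w Hwn). rewrite (dsym d Hm y w) in Hdw.
    assert (/ (INR n + 1) <= / INR M1).
    { apply Rinv_le_contravar. apply lt_0_INR; lia.
      assert (INR M1 <= INR n) by (apply le_INR; lia). lra. }
    lra.
Qed.

Lemma near1 (da db : R) : 0 < da -> 0 < db -> exists s, 0 <= s < 1 /\
  Rabs (s - 1) < da /\ Rabs (s - 1) < db /\ 1 - da < s.
Proof.
  intros Ha Hb. set (m := Rmin (Rmin da db) 1).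
  assert (H1 : m <= Rmin da db) by apply Rmin_l.
  assert (H2 : m <= 1) by apply Rmin_r.
  assert (H3 : Rmin da db <= da) by apply Rmin_l.
  assert (H4 : Rmin da db <= db) by apply Rmin_r.
  assert (H5 : 0 < m) by (apply Rmin_glb_lt; [apply Rmin_glb_lt|]; lra).
  exists (1 - m / 2).
  replace (1 - m / 2 - 1) with (- (m / 2)) by ring. rewrite Rabs_Ropp, Rabs_pos_eq by lra.
  lra.
Qed.

Lemma iter_contr {X} d (g : X -> X) c : 0 <= c ->
  (forall a b, d (g a) (g b) <= c * d a b) ->
  forall n a b, d (Nat.iter n g a) (Nat.iter n g b) <= c ^ n * d a b.
Proof.
  intros Hc Hg n; induction n; intros a b; simpl. lra.
  eapply Rle_trans. apply Hg. rewrite Rmult_assoc. apply Rmult_le_compat_l; auto.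
Qed.

Lemma iter_fix {X} (g : X -> X) a : g a = a -> forall n, Nat.iter n g a = a.
Proof. intros H n; induction n; simpl; auto. rewrite IHn; auto. Qed.

Theorem mainTheorem3 (X : Type) (d : X -> X -> R)
  (Hmetric : is_metric X d) (Hcomplete : complete X d)
  (N : nat) (HN : (2 <= N)%nat)
  (f : nat -> R -> X -> X)
  (Hcont : forall i t, (i < N)%nat -> 0 <= t <= 1 -> continuous_map X d (f i t))
  (* (H1) *)
  (H1 : forall (i : nat) (x : X) (t : R), (i < N)%nat -> 0 <= t <= 1 ->
     forall eps, 0 < eps -> exists delta, 0 < delta /\
       forall s, 0 <= s <= 1 -> Rabs (s - t) < delta -> d (f i s x) (f i t x) < eps)
  (* (H2) : Lip(F_t,d) = max_i Lip(f_(i,t),d) < 1 for t in [0,1) *)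
  (H2 : forall (i : nat) (t : R), (i < N)%nat -> 0 <= t < 1 ->
     Rbar_lt (Lip d (f i t)) 1)
  (* (H3) : q i = lim_{t -> 1^-} q_{i,t}, q_{i,t} the unique fixed point of f_(i,t) *)
  (q : nat -> X)
  (H3 : forall i, (i < N)%nat -> forall eps, 0 < eps -> exists delta, 0 < delta /\
     forall t, 1 - delta < t < 1 -> forall y, f i t y = y -> d y (q i) < eps) :
  exists A : X -> Prop,
    is_lower_transition_attractor d N f q A /\
    (* (i) *)
    set_eq A (fun x => forall B : X -> Prop,
                 set_eq (hutchinson d (F1 N f) B) B -> subset (Qset N q) B -> B x) /\
    (* (ii) *)
    set_eq A (orbit_closure d (F1 N f) (Qset N q)) /\
    (* (iii), (iv) *)
    (forall J : nat -> Prop,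
       (forall i, J i -> (i < N)%nat) -> (exists i, J i) ->
       (forall i, (i < N)%nat -> Lip d (f i 1) = Finite 1 -> J i) ->
       set_eq A (orbit_closure d (F1 N f) (Qsub J q)) /\
       is_semiattractor d (F1flat N f J q) A).
Proof.
  assert (Hne1 : forall i, (i < N)%nat -> forall a b, d (f i 1 a) (f i 1 b) <= d a b).
  { intros i Hi a b. apply Rle_plus_epsilon. intros e He.
    destruct (H1 i a 1 Hi ltac:(lra) (e/2)) as [da [Hda Ha]]; [lra|].
    destruct (H1 i b 1 Hi ltac:(lra) (e/2)) as [db [Hdb Hb]]; [lra|].
    destruct (near1 da db Hda Hdb) as [s [Hs [Hs1 [Hs2 _]]]].
    destruct (lip_contr d Hmetric (f i s) (H2 i s Hi Hs)) as [c [Hc Hcd]].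
    pose proof (Ha s ltac:(lra) Hs1) as E1. pose proof (Hb s ltac:(lra) Hs2) as E2.
    pose proof (Hcd a b) as E3.
    pose proof (dtri d Hmetric (f i 1 a) (f i s a) (f i 1 b)) as T1.
    pose proof (dtri d Hmetric (f i s a) (f i s b) (f i 1 b)) as T2.
    rewrite (dsym d Hmetric (f i 1 a) (f i s a)) in T1.
    pose proof (dpos d Hmetric a b).
    assert (c * d a b <= 1 * d a b) by (apply Rmult_le_compat_r; lra). lra. }
  assert (Hfix : forall i, (i < N)%nat -> f i 1 (q i) = q i).
  { intros i Hi. apply (dzero d Hmetric). intros e He.
    destruct (H3 i Hi (e/3)) as [del [Hdel Hq]]; [lra|].
    destruct (H1 i (q i) 1 Hi ltac:(lra) (e/3)) as [del' [Hdel' Hc]]; [lra|].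
    destruct (near1 del del' Hdel Hdel') as [t [Ht [Ht1 [Ht2 Ht3]]]].
    destruct (lip_contr d Hmetric (f i t) (H2 i t Hi Ht)) as [c [Hc0 Hcc]].
    destruct (banach d Hmetric Hcomplete (f i t) c (q i) Hc0 Hcc) as [y Hy].
    pose proof (Hq t ltac:(lra) y Hy) as E1.
    pose proof (Hc t ltac:(lra) Ht2) as E2.
    pose proof (Hcc (q i) y) as E3. rewrite Hy in E3.
    pose proof (dtri d Hmetric (f i 1 (q i)) (f i t (q i)) (q i)) as T1.
    pose proof (dtri d Hmetric (f i t (q i)) y (q i)) as T2.
    rewrite (dsym d Hmetric (f i 1 (q i)) (f i t (q i))) in T1.
    rewrite (dsym d Hmetric (q i) y) in E3.
    pose proof (dpos d Hmetric y (q i)).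
    assert (c * d y (q i) <= 1 * d y (q i)) by (apply Rmult_le_compat_r; lra). lra. }
  set (F := F1 N f).
  assert (Hne : forall g, F g -> forall a b, d (g a) (g b) <= d a b).
  { intros g [i [Hi ->]]. apply Hne1; auto. }
  assert (HseedJ : forall J : nat -> Prop, (forall i, J i -> (i < N)%nat) ->
            subset (Qsub J q) (hutchinson d F (Qsub J q))).
  { intros J HJ x [i [Hi ->]]. rewrite <- (Hfix i (HJ i Hi)) at 1.
    apply hutch_in; auto. exists i; split; auto. exists i; auto. }
  assert (Hseed : subset (Qset N q) (hutchinson d F (Qset N q))).
  { intros x [i [Hi ->]]. rewrite <- (Hfix i Hi) at 1.
    apply hutch_in; auto. exists i; split; auto. exists i; auto. }
  set (A := orbit_closure d F (Qset N q)).
  assert (HA : set_eq (hutchinson d F A) A) by (apply orbit_fixed; auto).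
  assert (HQA : subset (Qset N q) A) by (apply orbit_incl; auto).
  assert (Hmin : forall B, set_eq (hutchinson d F B) B -> subset (Qset N q) B -> subset A B).
  { intros B HB HQB. apply orbit_min; auto. }
  exists A. split; [split; [|split]; auto|]. split.
  { intros x; split. intros Hx B HB HQB. apply (Hmin B HB HQB); auto.
    intros H. apply H; auto. }
  split. { intros x; tauto. }
  intros J HJN [j Hj] HJlip.
  set (A' := orbit_closure d F (Qsub J q)).
  assert (HA' : set_eq (hutchinson d F A') A') by (apply orbit_fixed; auto).
  assert (Hmem : forall g, F g -> forall n, hutch_iter d F n (Qsub J q) (Nat.iter n g (q j))).
  { intros g Hg n; induction n; simpl. exists j; auto. apply hutch_in; auto. }
  assert (HQA' : subset (Qset N q) A').
  { intros x [i [Hi ->]]. destruct (classic (J i)) as [HJi|HJi].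
    - apply orbit_incl; auto. exists i; auto.
    - assert (Hlt : Rbar_lt (Lip d (f i 1)) 1).
      { pose proof (lip_le1 d Hmetric (f i 1) (Hne1 i Hi)) as Hle.
        destruct (Lip d (f i 1)) as [r| |] eqn:E; simpl in *; auto.
        destruct Hle as [Hle|Hle]; auto. exfalso; apply HJi, HJlip; auto.
        rewrite E, Hle; auto. }
      destruct (lip_contr d Hmetric (f i 1) Hlt) as [c [Hc Hcc]].
      set (D := d (q i) (q j)). assert (HD : 0 <= D) by apply (dpos d Hmetric).
      intros e He.
      destruct (pow_lt_1_zero c) with (y := e / (D + 1)) as [M HM].
      { rewrite Rabs_pos_eq; lra. }
      { apply Rdiv_lt_0_compat; lra. }
      exists (Nat.iter M (f i 1) (q j)). split.
      + exists M. apply Hmem. exists i; auto.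
      + pose proof (iter_contr d (f i 1) c (proj1 Hc) Hcc M (q i) (q j)) as E1.
        rewrite (iter_fix _ _ (Hfix i Hi)) in E1. fold D in E1.
        pose proof (HM M (le_n _)) as E2. rewrite Rabs_pos_eq in E2 by (apply pow_le; lra).
        assert (E3 : c ^ M * D <= e / (D + 1) * D) by (apply Rmult_le_compat_r; lra).
        assert (E4 : e / (D + 1) * D < e).
        { replace (e / (D + 1) * D) with (e * (D / (D + 1))) by (field; lra).
          rewrite <- (Rmult_1_r e) at 2. apply Rmult_lt_compat_l; auto.
          apply Rmult_lt_reg_r with (D + 1); [lra|].
          unfold Rdiv. rewrite Rmult_assoc, Rinv_l by lra. lra. }
        lra. }
  assert (HAA' : set_eq A A').
  { intros x; split; intros Hx.
    - apply (Hmin A' HA' HQA'); auto.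
    - revert x Hx. apply orbit_mono. intros x [i [Hi ->]]. exists i; auto. }
  split; auto.
  set (G := F1flat N f J q).
  split.
  { exists (q O). apply HQA. exists O; split; auto; lia. }
  intros y; split.
  - intros Hy x. apply HAA' in Hy.
    destruct (approx d Hmetric (fun n => hutch_iter d F n (Qsub J q)) y) as [v [Hv Hcv]].
    + intros n. apply iter_incr; auto.
    + intros n. exists (q j). apply (iter_incr_le d F _ (HseedJ J HJN) O n); [lia|].
      exists j; auto.
    + exact Hy.
    + assert (HT : forall n, subset (hutch_iter d F n (Qsub J q))
                                    (hutch_iter d G (S n) (fun z => z = x))).
      { intros n; induction n; simpl.
        - intros z [i [Hi ->]]. apply (hutch_in d Hmetric G _ (fun _ => q i) x).
          right; exists i; auto. reflexivity.
        - apply hutch_mono; auto. intros g Hg; left; auto. }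
      exists (fun n => match n with O => x | S m => v m end). split.
      * intros [|n]; simpl; auto. apply HT; auto.
      * intros e He. destruct (Hcv e He) as [M HM]. exists (S M).
        intros [|n] Hn; [lia|]. apply HM; lia.
  - intros Hy. destruct (Hy (q j)) as [u [Hu Hcv]].
    assert (HGA : forall n, subset (hutch_iter d G n (fun z => z = q j)) A).
    { intros n; induction n; simpl.
      - intros z ->. apply HQA. exists j; auto.
      - intros z Hz. apply (set_closed d Hmetric F A HA). revert z Hz.
        apply closure_mono. intros w [g [[Hg|[i [Hi ->]]] [z [Hz ->]]]].
        + apply HA. apply hutch_in; auto.
        + apply HQA. exists i; auto. }
    apply (set_closed d Hmetric F A HA). intros e He.
    destruct (Hcv e He) as [M HM]. exists (u M). split.
    + apply (HGA M); auto.
    + rewrite (dsym d Hmetric). apply HM; lia.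
Qed.
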